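(* If $\mu$ and $\nu$ are fuzzy $\Gamma$-hyper bi-ideals of a fuzzy $\Gamma$-hypersemigroup $(M,\circ)$, then $\mu\cap\nu$ is also a fuzzy $\Gamma$-hyper bi-ideal of $(M,\circ)$.
   Context: $M,\Gamma$ are nonempty sets; a fuzzy subset of $M$ is a map $M\to[0,1]$. A fuzzy $\Gamma$-hyperoperation assigns to each $(a,\gamma,b)\in M\times\Gamma\times M$ a fuzzy subset $a\circ\gamma\circ b$. For $a\in M$ and fuzzy $\mu$: $(a\circ\gamma\circ\mu)(r)=\bigvee_{t\in M}((a\circ\gamma\circ t)(r)\wedge\mu(t))$ if $\mu\ne0$, else $0$; $(\mu\circ\gamma\circ a)(r)=\bigvee_{t\in M}(\mu(t)\wedge(t\circ\gamma\circ a)(r))$ if $\mu\ne0$, else $0$. For fuzzy $\mu,\nu$: $(\mu\circ\gamma\circ\nu)(t)=\bigvee_{p,q\in M}(\mu(p)\wedge(p\circ\gamma\circ q)(t)\wedge\nu(q))$. $(M,\circ)$ is a fuzzy $\Gamma$-hypersemigroup if $(a\circ\alpha\circ b)\circ\beta\circ c=a\circ\alpha\circ(b\circ\beta\circ c)$ for all $a,b,c\in M$, $\alpha,\beta\in\Gamma$. For fuzzy sets, $\mu\subseteq\nu$ means $\mu(x)\le\nu(x)$ for all $x$; $(\mu\cap\nu)(x)=\min(\mu(x),\nu(x))$. A fuzzy sub $\Gamma$-hypersemigroup is a fuzzy subset $\mu$ with $\mu\circ\gamma\circ\mu\subseteq\mu$ for all $\gamma\in\Gamma$. A fuzzy $\Gamma$-hyper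 bi-ideal is a fuzzy sub $\Gamma$-hypersemigroup $\mu$ with $(\mu\circ\alpha\circ y)\circ\beta\circ\mu\subseteq\mu$ for all $y\in M$, $\alpha,\beta\in\Gamma$. *)

(* Defs.v *)
From HB Require Import structures.
From mathcomp Require Import all_boot all_order all_algebra.
From mathcomp Require Import boolp classical_sets reals.
Set Implicit Arguments. Unset Strict Implicit. Unset Printing Implicit Defensive.
Import Order.TTheory GRing.Theory Num.Theory.
Local Open Scope ring_scope.
Local Open Scope classical_set_scope.

Definition is_fuzzy (R : realType) (M : Type) (mu : M -> R) : Prop :=
  forall x, 0 <= mu x <= 1.

Definition fzero (R : realType) (M : Type) : M -> R := fun _ => 0.

Definition hyperop (R : realType) (M G : Type) := M -> G -> M -> (M -> R).

Definition is_fuzzy_hyperop (R : realType) (M G : Type) (h : hyperop R M G) : Prop :=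
  forall a g b, is_fuzzy (h a g b).

Definition elt_op (R : realType) (M G : Type) (h : hyperop R M G)
  (a : M) (g : G) (mu : M -> R) : M -> R :=
  fun r => if pselect (mu = @fzero R M) then 0
           else sup [set v | exists t : M, v = Order.min (h a g t r) (mu t)].

Definition op_elt (R : realType) (M G : Type) (h : hyperop R M G)
  (mu : M -> R) (g : G) (a : M) : M -> R :=
  fun r => if pselect (mu = @fzero R M) then 0
           else sup [set v | exists t : M, v = Order.min (mu t) (h t g a r)].

Definition op_fuzzy (R : realType) (M G : Type) (h : hyperop R M G)
  (mu : M -> R) (g : G) (nu : M -> R) : M -> R :=
  fun t => sup [set v | exists p q : M,
                  v = Order.min (mu p) (Order.min (h p g q t) (nu q))].

Definition fsubset (R : realType) (M : Type) (mu nu : M -> R) : Prop :=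
  forall x, mu x <= nu x.

Definition fcap (R : realType) (M : Type) (mu nu : M -> R) : M -> R :=
  fun x => Order.min (mu x) (nu x).

Definition is_fuzzy_hypersemigroup (R : realType) (M G : Type) (h : hyperop R M G) : Prop :=
  is_fuzzy_hyperop h /\
  forall (a b c : M) (al be : G),
    op_elt h (h a al b) be c = elt_op h a al (h b be c).

Definition is_fuzzy_sub_hypersemigroup (R : realType) (M G : Type) (h : hyperop R M G)
  (mu : M -> R) : Prop :=
  is_fuzzy mu /\ forall g : G, fsubset (op_fuzzy h mu g mu) mu.

Definition is_fuzzy_hyper_bi_ideal (R : realType) (M G : Type) (h : hyperop R M G)
  (mu : M -> R) : Prop :=
  is_fuzzy_sub_hypersemigroup h mu /\
  forall (y : M) (al be : G), fsubset (op_fuzzy h (op_elt h mu al y) be mu) mu.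

(* Main.v *)
Require Import Defs.
From mathcomp Require Import all_boot all_order all_algebra.
From mathcomp Require Import boolp classical_sets reals.
Import Order.TTheory GRing.Theory Num.Theory.
Local Open Scope ring_scope.
Local Open Scope classical_set_scope.

Lemma supmono (R : realType) (A B : set R) :
  (forall a, A a -> exists2 b, B b & a <= b) -> A !=set0 ->
  (forall b, B b -> b <= 1) -> sup A <= sup B.
Proof.
move=> hAB [a Aa] hB1; apply: sup_le.
- by move=> x /hAB [b Bb le]; apply/downP; exists b.
- by exists a.
- have [b Bb _] := hAB a Aa; split; first by exists b.
  by exists 1 => y /hB1.
Qed.

Lemma sup_ge0 (R : realType) (A : set R) (a : R) :
  A a -> 0 <= a -> (forall b, A b -> b <= 1) -> 0 <= sup A.
Proof.
move=> Aa a0 hB; apply: (le_trans a0).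
apply: (sup_upper_bound (E:=A)) => //; split; first by exists a.
by exists 1 => y /hB.
Qed.

Lemma opf_mono (R : realType) (M G : Type) (h : hyperop R M G)
  (mu mu' nu nu' : M -> R) g :
  inhabited M -> is_fuzzy_hyperop h ->
  fsubset mu mu' -> fsubset nu nu' ->
  fsubset (op_fuzzy h mu g nu) (op_fuzzy h mu' g nu').
Proof.
move=> [m] hh hmu hnu t; rewrite /op_fuzzy; apply: supmono.
- move=> a [p [q ->]]; exists (Order.min (mu' p) (Order.min (h p g q t) (nu' q))).
    by exists p, q.
  by apply: le_min2 => //; apply: le_min2.
- by exists (Order.min (mu m) (Order.min (h m g m t) (nu m))); exists m, m.
- move=> b [p [q ->]]; rewrite ge_min; apply/orP; right.
  rewrite ge_min; apply/orP; left; by have /andP[] := hh p g q t.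
Qed.

Lemma opelt_mono (R : realType) (M G : Type) (h : hyperop R M G)
  (mu nu : M -> R) g y :
  inhabited M -> is_fuzzy_hyperop h -> is_fuzzy mu -> is_fuzzy nu ->
  fsubset (op_elt h (fcap mu nu) g y) (op_elt h mu g y).
Proof.
move=> [m] hh fmu fnu r; rewrite /op_elt.
have setb : forall (f : M -> R) b,
   [set v | exists t : M, v = Order.min (f t) (h t g y r)] b -> b <= 1.
  move=> f b [t ->]; rewrite ge_min; apply/orP; right; by have /andP[] := hh t g y r.
case: (pselect (fcap mu nu = @fzero R M)) => [H0|hc].
  case: (pselect (mu = @fzero R M)) => // H1; apply: (@sup_ge0 _ _ (Order.min (mu m) (h m g y r))).
  - by exists m.
  - by rewrite le_min; have /andP[-> _] := fmu m; have /andP[-> _] := hh m g y r.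
  - exact: setb.
case: (pselect (mu = @fzero R M)) => [hm|H2].
  exfalso; apply: hc; apply/funext => x; rewrite /fcap /fzero hm /fzero.
  by apply/eqP; rewrite eq_le ge_min lexx le_min lexx /=; have /andP[-> _] := fnu x.
apply: supmono.
- move=> a [t ->]; exists (Order.min (mu t) (h t g y r)); first by exists t.
  by apply: le_min2 => //; rewrite /fcap ge_min lexx.
- by exists (Order.min (fcap mu nu m) (h m g y r)); exists m.
- exact: setb.
Qed.

Theorem theorem4p13 (R : realType) (M G : Type) (h : hyperop R M G)
  (mu nu : M -> R) :
  inhabited M -> inhabited G ->
  is_fuzzy_hypersemigroup h ->
  is_fuzzy_hyper_bi_ideal h mu -> is_fuzzy_hyper_bi_ideal h nu ->
  is_fuzzy_hyper_bi_ideal h (fcap mu nu).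
Proof.
move=> iM _ [hh _] [[fmu smu] bmu] [[fnu snu] bnu].
have capl : fsubset (fcap mu nu) mu by move=> x; rewrite /fcap ge_min lexx.
have capr : fsubset (fcap mu nu) nu by move=> x; rewrite /fcap ge_min lexx orbT.
have capf : is_fuzzy (fcap mu nu).
  move=> x; have /andP[a b] := fmu x; have /andP[c d] := fnu x.
  by rewrite le_min a c /= ge_min b.
have key : forall a x, a <= mu x -> a <= nu x -> a <= fcap mu nu x.
  by move=> a x p q; rewrite /fcap le_min p q.
split; first split => //.
  move=> g x; apply: key.
    apply: le_trans (smu g x); exact: opf_mono.
  apply: le_trans (snu g x); exact: opf_mono.
move=> y al be x; apply: key.
  apply: le_trans (bmu y al be x); apply: opf_mono => //.
  exact: opelt_mono.
apply: le_trans (bnu y al be x); apply: opf_mono => //.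
have -> : fcap mu nu = fcap nu mu.
  by apply/funext => z; rewrite /fcap minC.
exact: opelt_mono.
Qed.
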